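(* Consider the two-source game ($m=2$) with $n_1\ge n_2\ge 0$ and $q\in[0,1)$. Let $\mathbf p$ be an arbitrary pure strategy profile and let $u_1,u_2$ be the numbers of users of $N_1$ and $N_2$, respectively, that choose DP under $\mathbf p$. Define $$t_1(x)=\frac{q\mu/\phi+x(1+\bar q^2)+(n_1+1)\bar q-n_2\bar q^2}{2\bar q},\qquad t_2(x)=\frac{q\mu/\phi+x(1+\bar q^2)+(n_2+1)\bar q-n_1\bar q^2}{2\bar q}.$$ Then: [1] if (a) $u_1=n_1$ and $u_2<n_2$, or (b) $u_1=0$ and $u_2>0$, then $\mathbf p$ is not a Nash equilibrium; [2] if $u_1\in[0,n_1)$ and $u_2\in[0,n_2)$, then $\mathbf p$ is a Nash equilibrium if and only if $u_1\ge t_1(u_2)-1$ and $u_2\ge t_2(u_1)-1$; [3] if $u_1\in(0,n_1)$ and $u_2=n_2$, then $\mathbf p$ is a Nash equilibrium if and only if $u_1\in[t_1(u_2)-1,\,t_1(u_2)]$; [4] if $u_1=n_1$ and $u_2=n_2$, then $\mathbf p$ is a Nash equilibrium if and only if $n_1\bar q\le q\mu/\phi+n_2+\bar q$.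
   Context: Two-source network: sources $s_1,s_2$ and destination $d$; source $s_i$ has a set $N_i$ of $n_i$ users. Each user generates an independent Poisson flow of packets of rate $\phi>0$; each direct link $(s_i,d)$ has service rate $\mu>0$; the sidelink between $s_1$ and $s_2$ loses packets independently with probability $q$, and $\bar q=1-q$. Only pure strategies are considered: a user of $N_1$ chooses DP $(s_1,d)$ or IP $(s_1,s_2,d)$; a user of $N_2$ chooses DP $(s_2,d)$ or IP $(s_2,s_1,d)$. With $u_i$ users of $N_i$ on DP, the traffic rates are $T_1=u_1\phi+(n_2-u_2)\bar q\phi$ and $T_2=u_2\phi+(n_1-u_1)\bar q\phi$. The loss rate of a user of $N_i$ is $\phi\frac{T_i}{T_i+\mu}$ on DP and $\phi\left(q+\bar q\frac{T_j}{T_j+\mu}\right)$ on IP to $s_j$, $j\ne i$ (traffic rates include the user's own traffic). A Nash equilibrium is a pure profile in which no user can strictly decrease its loss rate by unilaterally switching its route. *)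

(* Defs.v *)
From HB Require Import structures.
From mathcomp Require Import all_boot all_order all_algebra.
Set Implicit Arguments. Unset Strict Implicit. Unset Printing Implicit Defensive.
Import Order.TTheory GRing.Theory Num.Theory.
Local Open Scope ring_scope.

(* A pure strategy of the users of N_i: true = DP (direct path), false = IP. *)
Definition profile (n : nat) := {ffun 'I_n -> bool}.

Definition dpcount (n : nat) (p : profile n) : nat := #|[pred k | p k]|.

Definition upd (n : nat) (p : profile n) (k : 'I_n) (b : bool) : profile n :=
  [ffun j => if j == k then b else p j].

Definition traffic {R : realFieldType} (phi q : R) (ui nj uj : nat) : R :=
  ui%:R * phi + (nj - uj)%:R * (1 - q) * phi.

Definition loss_DP {R : realFieldType} (phi mu Ti : R) : R := phi * (Ti / (Ti + mu)).
Definition loss_IP {R : realFieldType} (phi mu q Tj : R) : R :=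
  phi * (q + (1 - q) * (Tj / (Tj + mu))).

Definition loss1 {R : realFieldType} (phi mu q : R) (n1 n2 : nat)
  (p1 : profile n1) (p2 : profile n2) (k : 'I_n1) : R :=
  let u1 := dpcount p1 in let u2 := dpcount p2 in
  if p1 k then loss_DP phi mu (traffic phi q u1 n2 u2)
  else loss_IP phi mu q (traffic phi q u2 n1 u1).

Definition loss2 {R : realFieldType} (phi mu q : R) (n1 n2 : nat)
  (p1 : profile n1) (p2 : profile n2) (k : 'I_n2) : R :=
  let u1 := dpcount p1 in let u2 := dpcount p2 in
  if p2 k then loss_DP phi mu (traffic phi q u2 n1 u1)
  else loss_IP phi mu q (traffic phi q u1 n2 u2).

Definition is_NE {R : realFieldType} (phi mu q : R) (n1 n2 : nat)
  (p1 : profile n1) (p2 : profile n2) : Prop :=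
  (forall (k : 'I_n1) (b : bool),
     ~ (loss1 phi mu q (upd p1 k b) p2 k < loss1 phi mu q p1 p2 k)) /\
  (forall (k : 'I_n2) (b : bool),
     ~ (loss2 phi mu q p1 (upd p2 k b) k < loss2 phi mu q p1 p2 k)).

Definition t1 {R : realFieldType} (phi mu q : R) (n1 n2 : nat) (x : R) : R :=
  (q * mu / phi + x * (1 + (1 - q) ^+ 2) + (n1%:R + 1) * (1 - q)
     - n2%:R * (1 - q) ^+ 2) / (2 * (1 - q)).

Definition t2 {R : realFieldType} (phi mu q : R) (n1 n2 : nat) (x : R) : R :=
  (q * mu / phi + x * (1 + (1 - q) ^+ 2) + (n2%:R + 1) * (1 - q)
     - n1%:R * (1 - q) ^+ 2) / (2 * (1 - q)).

(* Main.v *)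
Require Import Defs.
From HB Require Import structures.
From mathcomp Require Import all_boot all_order all_algebra.
From mathcomp Require Import ring lra zify.
Import Order.TTheory GRing.Theory Num.Theory.
Local Open Scope ring_scope.
Set Implicit Arguments. Unset Strict Implicit.

Lemma dpcount_upd n (p : profile n) k b :
  (dpcount (upd p k b) + p k = dpcount p + b)%N.
Proof.
rewrite /dpcount (cardD1 k [pred j | upd p k b j]) (cardD1 k [pred j | p j]).
rewrite !inE ffunE eqxx.
have -> : #|[predD1 [pred j | upd p k b j] & k]| = #|[predD1 [pred j | p j] & k]|.
  apply: eq_card => j; rewrite !inE ffunE.
  by case: eqP.
by case: b; case: (p k) => /=; rewrite ?addn0 ?addn1 ?add0n ?add1n; try lia; idtac.
Qed.

Lemma dpcount_le n (p : profile n) : (dpcount p <= n)%N.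
Proof. by rewrite /dpcount; apply: leq_trans (max_card _) _; rewrite card_ord. Qed.

Lemma ex_dp n (p : profile n) : (0 < dpcount p)%N -> exists k, p k.
Proof. by case/card_gt0P => k; rewrite inE => h; exists k. Qed.

Lemma ex_ip n (p : profile n) : (dpcount p < n)%N -> exists k, ~~ p k.
Proof.
move=> h.
have := cardC [pred k | p k]; rewrite card_ord => e.
have e2 : #|[pred k | p k]| = dpcount p by [].
have : (0 < #|[predC [pred k | p k]]|)%N.
  move: e h; rewrite e2. move: (#|_|) => c. lia.
by case/card_gt0P => k; rewrite !inE => hk; exists k.
Qed.

Lemma upd_id n (p : profile n) k : upd p k (p k) = p.
Proof. by apply/ffunP => j; rewrite ffunE; case: eqP => // ->. Qed.

Lemma upd_at n (p : profile n) k b : upd p k b k = b.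
Proof. by rewrite ffunE eqxx. Qed.

Section Real.
Variable R : realFieldType.

Lemma sign_key (phi mu q T1 T2 : R) : 0 < phi -> 0 < mu -> 0 <= T1 -> 0 <= T2 ->
  loss_DP phi mu T1 - loss_IP phi mu q T2 =
  ((1 - q) * T1 - T2 - q * mu) * (phi * mu / ((T1 + mu) * (T2 + mu))).
Proof.
move=> hp hm h1 h2; rewrite /loss_DP /loss_IP.
have n1 : T1 + mu != 0 by rewrite gt_eqF // ltr_wpDl.
have n2 : T2 + mu != 0 by rewrite gt_eqF // ltr_wpDl.
by field; rewrite n1 n2.
Qed.

Lemma cpos (phi mu T1 T2 : R) : 0 < phi -> 0 < mu -> 0 <= T1 -> 0 <= T2 ->
  0 < phi * mu / ((T1 + mu) * (T2 + mu)).
Proof.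
move=> hp hm h1 h2.
apply: divr_gt0; first exact: mulr_gt0.
by apply: mulr_gt0; rewrite ltr_wpDl.
Qed.

Lemma nlt (x y : R) : ~ (x < y) <-> y <= x.
Proof. by rewrite leNgt; split => [/negP|/negP]. Qed.

Lemma key1 (phi mu q t1 t2 : R) : 0 < phi -> 0 < mu -> 0 <= t1 -> 0 <= t2 ->
  (~ (loss_IP phi mu q (t2 * phi) < loss_DP phi mu (t1 * phi))) <->
  ((1 - q) * t1 <= t2 + q * (mu / phi)).
Proof.
move=> hp hm h1 h2.
have T1 : 0 <= t1 * phi by rewrite mulr_ge0 // ltW.
have T2 : 0 <= t2 * phi by rewrite mulr_ge0 // ltW.
rewrite nlt -subr_le0 sign_key //.
rewrite pmulr_lle0; last exact: cpos.
have -> : (1 - q) * (t1 * phi) - t2 * phi - q * mu = ((1 - q) * t1 - (t2 + q * (mu / phi))) * phi.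
  by field; rewrite gt_eqF.
by rewrite pmulr_lle0 // subr_le0.
Qed.

Lemma key2 (phi mu q t1 t2 : R) : 0 < phi -> 0 < mu -> 0 <= t1 -> 0 <= t2 ->
  (~ (loss_DP phi mu (t1 * phi) < loss_IP phi mu q (t2 * phi))) <->
  (t2 + q * (mu / phi) <= (1 - q) * t1).
Proof.
move=> hp hm h1 h2.
have T1 : 0 <= t1 * phi by rewrite mulr_ge0 // ltW.
have T2 : 0 <= t2 * phi by rewrite mulr_ge0 // ltW.
rewrite nlt -subr_ge0 sign_key //.
rewrite pmulr_lge0; last exact: cpos.
have -> : (1 - q) * (t1 * phi) - t2 * phi - q * mu = ((1 - q) * t1 - (t2 + q * (mu / phi))) * phi.
  by field; rewrite gt_eqF.
by rewrite pmulr_lge0 // subr_ge0.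
Qed.

Lemma trafficE (phi q : R) ui nj uj : (uj <= nj)%N ->
  traffic phi q ui nj uj = (ui%:R + (nj%:R - uj%:R) * (1 - q)) * phi.
Proof. by move=> h; rewrite /traffic natrB //; ring. Qed.

End Real.
Lemma tnn (R : realFieldType) (q : R) (y N x : nat) : q <= 1 -> (x <= N)%N ->
  0 <= y%:R + (N%:R - x%:R) * (1 - q).
Proof.
move=> hq hx; apply: addr_ge0 => //; apply: mulr_ge0; last by rewrite subr_ge0.
by rewrite subr_ge0 ler_nat.
Qed.

Lemma side1 (R : realFieldType) (phi mu q : R) n1 n2 (p1 : profile n1) (p2 : profile n2) :
  0 < phi -> 0 < mu -> 0 <= q -> q < 1 ->
  let a : R := (dpcount p1)%:R in let b : R := (dpcount p2)%:R in
  (forall k bb, ~ loss1 phi mu q (upd p1 k bb) p2 k < loss1 phi mu q p1 p2 k) <->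
  (((0 < dpcount p1)%N -> (1-q)*(a + (n2%:R - b)*(1-q)) <= b + (n1%:R - (a - 1))*(1-q) + q*(mu/phi)) /\
   ((dpcount p1 < n1)%N -> b + (n1%:R - a)*(1-q) + q*(mu/phi) <= (1-q)*((a+1) + (n2%:R - b)*(1-q)))).
Proof.
move=> hp hm hq0 hq1 a b.
have hq : q <= 1 by apply: ltW.
have hu1 := dpcount_le p1; have hu2 := dpcount_le p2.
split.
- move=> H; split.
  + move=> /ex_dp [k pk]. have := H k false.
    have e := dpcount_upd p1 k false. rewrite pk /= in e.
    have hd := dpcount_le (upd p1 k false).
    rewrite /loss1 /= upd_at pk !trafficE //.
    rewrite key1 //; try exact: tnn.
    have ed : (dpcount (upd p1 k false))%:R = a - 1 :> R.
      have e' : dpcount p1 = (dpcount (upd p1 k false) + 1)%N by lia.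
      by rewrite /a e' natrD; lra.
    by rewrite ed.
  + move=> /ex_ip [k pk]. have := H k true.
    have e := dpcount_upd p1 k true. rewrite (negbTE pk) /= in e.
    have hd := dpcount_le (upd p1 k true).
    rewrite /loss1 /= upd_at (negbTE pk) !trafficE //.
    rewrite key2 //; try exact: tnn.
    have ed : (dpcount (upd p1 k true))%:R = a + 1 :> R.
      have e' : dpcount (upd p1 k true) = (dpcount p1 + 1)%N by lia.
      by rewrite /a e' natrD.
    by rewrite ed.
- move=> [H1 H2] k bb.
  have [->|ne] := eqVneq bb (p1 k); first by rewrite upd_id ltxx.
  case pk : (p1 k); move: ne; rewrite pk; case: bb => // _.
  + have e := dpcount_upd p1 k false. rewrite pk /= in e.
    have hd := dpcount_le (upd p1 k false).
    rewrite /loss1 /= upd_at pk !trafficE //.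
    rewrite key1 //; try exact: tnn.
    have ed : (dpcount (upd p1 k false))%:R = a - 1 :> R.
      have e' : dpcount p1 = (dpcount (upd p1 k false) + 1)%N by lia.
      by rewrite /a e' natrD; lra.
    by rewrite ed; apply: H1; lia.
  + have e := dpcount_upd p1 k true. rewrite pk /= in e.
    have hd := dpcount_le (upd p1 k true).
    rewrite /loss1 /= upd_at pk !trafficE //.
    rewrite key2 //; try exact: tnn.
    have ed : (dpcount (upd p1 k true))%:R = a + 1 :> R.
      have e' : dpcount (upd p1 k true) = (dpcount p1 + 1)%N by lia.
      by rewrite /a e' natrD.
    by rewrite ed; apply: H2; lia.
Qed.

Lemma side2 (R : realFieldType) (phi mu q : R) n1 n2 (p1 : profile n1) (p2 : profile n2) :
  0 < phi -> 0 < mu -> 0 <= q -> q < 1 ->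
  let a : R := (dpcount p1)%:R in let b : R := (dpcount p2)%:R in
  (forall k bb, ~ loss2 phi mu q p1 (upd p2 k bb) k < loss2 phi mu q p1 p2 k) <->
  (((0 < dpcount p2)%N -> (1-q)*(b + (n1%:R - a)*(1-q)) <= a + (n2%:R - (b - 1))*(1-q) + q*(mu/phi)) /\
   ((dpcount p2 < n2)%N -> a + (n2%:R - b)*(1-q) + q*(mu/phi) <= (1-q)*((b+1) + (n1%:R - a)*(1-q)))).
Proof.
move=> hp hm hq0 hq1 a b.
have hq : q <= 1 by apply: ltW.
have hu1 := dpcount_le p2; have hu2 := dpcount_le p1.
split.
- move=> H; split.
  + move=> /ex_dp [k pk]. have := H k false.
    have e := dpcount_upd p2 k false. rewrite pk /= in e.
    have hd := dpcount_le (upd p2 k false).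
    rewrite /loss2 /= upd_at pk !trafficE //.
    rewrite key1 //; try exact: tnn.
    have ed : (dpcount (upd p2 k false))%:R = b - 1 :> R.
      have e' : dpcount p2 = (dpcount (upd p2 k false) + 1)%N by lia.
      by rewrite /b e' natrD; lra.
    by rewrite ed.
  + move=> /ex_ip [k pk]. have := H k true.
    have e := dpcount_upd p2 k true. rewrite (negbTE pk) /= in e.
    have hd := dpcount_le (upd p2 k true).
    rewrite /loss2 /= upd_at (negbTE pk) !trafficE //.
    rewrite key2 //; try exact: tnn.
    have ed : (dpcount (upd p2 k true))%:R = b + 1 :> R.
      have e' : dpcount (upd p2 k true) = (dpcount p2 + 1)%N by lia.
      by rewrite /b e' natrD.
    by rewrite ed.
- move=> [H1 H2] k bb.
  have [->|ne] := eqVneq bb (p2 k); first by rewrite upd_id ltxx.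
  case pk : (p2 k); move: ne; rewrite pk; case: bb => // _.
  + have e := dpcount_upd p2 k false. rewrite pk /= in e.
    have hd := dpcount_le (upd p2 k false).
    rewrite /loss2 /= upd_at pk !trafficE //.
    rewrite key1 //; try exact: tnn.
    have ed : (dpcount (upd p2 k false))%:R = b - 1 :> R.
      have e' : dpcount p2 = (dpcount (upd p2 k false) + 1)%N by lia.
      by rewrite /b e' natrD; lra.
    by rewrite ed; apply: H1; lia.
  + have e := dpcount_upd p2 k true. rewrite pk /= in e.
    have hd := dpcount_le (upd p2 k true).
    rewrite /loss2 /= upd_at pk !trafficE //.
    rewrite key2 //; try exact: tnn.
    have ed : (dpcount (upd p2 k true))%:R = b + 1 :> R.
      have e' : dpcount (upd p2 k true) = (dpcount p2 + 1)%N by lia.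
      by rewrite /b e' natrD.
    by rewrite ed; apply: H2; lia.
Qed.
Section Arith.
Variable R : realFieldType.
Variables (q M a b N1 N2 : R).
Hypotheses (hq0 : 0 <= q) (hq1 : q < 1) (hM : 0 < M).

Definition DP1 := (1-q)*(a + (N2 - b)*(1-q)) <= b + (N1 - (a - 1))*(1-q) + q*M.
Definition IP1 := b + (N1 - a)*(1-q) + q*M <= (1-q)*((a+1) + (N2 - b)*(1-q)).
Definition DP2 := (1-q)*(b + (N1 - a)*(1-q)) <= a + (N2 - (b - 1))*(1-q) + q*M.
Definition IP2 := a + (N2 - b)*(1-q) + q*M <= (1-q)*((b+1) + (N1 - a)*(1-q)).
Definition T1 x := (q*M + x*(1+(1-q)^+2) + (N1+1)*(1-q) - N2*(1-q)^+2)/(2*(1-q)).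
Definition T2 x := (q*M + x*(1+(1-q)^+2) + (N2+1)*(1-q) - N1*(1-q)^+2)/(2*(1-q)).

Lemma Q2pos : 0 < 2 * (1 - q). Proof. move: hq1; lra. Qed.

Lemma L_t1I : (T1 b - 1 <= a) = IP1.
Proof.
move: hq0 hq1 hM => hq0' hq1' hM'.
rewrite /T1 /IP1 lerBlDr ler_pdivrMr; last exact: Q2pos.
apply/idP/idP => h; lra.
Qed.

Lemma L_t1D : (a <= T1 b) = DP1.
Proof.
move: hq0 hq1 hM => hq0' hq1' hM'.
rewrite /T1 /DP1 ler_pdivlMr; last exact: Q2pos.
apply/idP/idP => h; lra.
Qed.

Lemma L_t2I : (T2 a - 1 <= b) = IP2.
Proof.
move: hq0 hq1 hM => hq0' hq1' hM'.
rewrite /T2 /IP2 lerBlDr ler_pdivrMr; last exact: Q2pos.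
apply/idP/idP => h; lra.
Qed.

Lemma A1a : a = N1 -> b + 1 <= N2 -> N2 <= N1 -> DP1 -> IP2 -> False.
Proof.
move: hq0 hq1 hM => hq0' hq1' hM'.
rewrite /DP1 /IP2 => -> h1 h2 d i.
set Q := 1 - q in d i *.
have hQ : 0 < Q by rewrite /Q; lra.
have hQ1 : Q <= 1 by rewrite /Q; lra.
have e : q = 1 - Q by rewrite /Q; lra.
rewrite e in d i.
have k1 : 0 <= (1 + Q) * (N1 - b - 1) by apply: mulr_ge0; lra.
have k2 : 0 <= Q * (1 + Q) * (N2 - b - 1) by apply: mulr_ge0; [apply: mulr_ge0|]; lra.
nra.
Qed.

Lemma A1b : a = 0 -> 1 <= b -> b <= N2 -> N2 <= N1 -> IP1 -> False.
Proof.
move: hq0 hq1 hM => hq0' hq1' hM'.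
rewrite /IP1 => -> h1 h2 h3 i.
set Q := 1 - q in i *.
have hQ : 0 < Q by rewrite /Q; lra.
have hQ1 : Q <= 1 by rewrite /Q; lra.
have e : q = 1 - Q by rewrite /Q; lra.
rewrite e in i.
have k1 : 0 <= (N1 - N2 * Q) * Q by apply: mulr_ge0; nra.
have k2 : 0 <= (b - 1) * (1 + Q ^+ 2) by apply: mulr_ge0; nra.
have k3 : 0 <= (1 - Q) * M by apply: mulr_ge0; lra.
nra.
Qed.

Lemma A2 : 0 <= a -> 0 <= b -> 0 <= N1 -> 0 <= N2 -> IP1 -> IP2 -> DP1 /\ DP2.
Proof.
move: hq0 hq1 hM => hq0' hq1' hM'.
rewrite /IP1 /IP2 /DP1 /DP2 => h1 h2 h3 h4 i1 i2.
set Q := 1 - q in i1 i2 *.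
have hQ : 0 < Q by rewrite /Q; lra.
have hQ1 : Q <= 1 by rewrite /Q; lra.
have e : q = 1 - Q by rewrite /Q; lra.
rewrite e in i1 i2 *.
have k1 : 0 <= a * (1 - Q) ^+ 2 by apply: mulr_ge0; nra.
have k2 : 0 <= b * (1 - Q) ^+ 2 by apply: mulr_ge0; nra.
have k3 : 0 <= (1 - Q) * M by apply: mulr_ge0; lra.
have k4 : 0 <= (N1 + N2) * (Q * (1 - Q)) by apply: mulr_ge0; nra.
split; nra.
Qed.

Lemma A3 : b = N2 -> 0 <= a -> 0 <= N1 -> 0 <= N2 -> IP1 -> DP2.
Proof.
move: hq0 hq1 hM => hq0' hq1' hM'.
rewrite /IP1 /DP2 => -> h1 h3 h4 i1.
set Q := 1 - q in i1 *.
have hQ : 0 < Q by rewrite /Q; lra.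
have hQ1 : Q <= 1 by rewrite /Q; lra.
have e : q = 1 - Q by rewrite /Q; lra.
rewrite e in i1 *.
have k1 : 0 <= a * (1 - Q) ^+ 2 by apply: mulr_ge0; nra.
have k3 : 0 <= (1 - Q) * M by apply: mulr_ge0; lra.
have k4 : 0 <= N1 * (Q * (1 - Q)) by apply: mulr_ge0; nra.
have k5 : 0 <= N2 * (1 - Q) by apply: mulr_ge0; nra.
nra.
Qed.

Lemma A4 : a = N1 -> b = N2 -> DP1 = (N1 * (1 - q) <= q * M + N2 + (1 - q)).
Proof.
move: hq0 hq1 hM => hq0' hq1' hM'.
rewrite /DP1 => -> ->; apply/idP/idP => h; nra.
Qed.

Lemma A4b : a = N1 -> b = N2 -> N2 <= N1 -> (N1 * (1 - q) <= q * M + N2 + (1 - q)) -> DP2.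
Proof.
move: hq0 hq1 hM => hq0' hq1' hM'.
rewrite /DP2 => -> -> h1 h; nra.
Qed.

End Arith.

Theorem theorem4 (R : realFieldType) (phi mu q : R) (n1 n2 : nat)
  (p1 : profile n1) (p2 : profile n2) :
  0 < phi -> 0 < mu -> 0 <= q -> q < 1 -> (n2 <= n1)%N ->
  let u1 := dpcount p1 in let u2 := dpcount p2 in
  (* [1] *)
  (((u1 = n1 /\ (u2 < n2)%N) \/ (u1 = 0%N /\ (0 < u2)%N)) ->
     ~ is_NE phi mu q p1 p2) /\
  (* [2] *)
  ((u1 < n1)%N -> (u2 < n2)%N ->
     (is_NE phi mu q p1 p2 <->
      (t1 phi mu q n1 n2 u2%:R - 1 <= u1%:R /\ t2 phi mu q n1 n2 u1%:R - 1 <= u2%:R))) /\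
  (* [3] *)
  ((0 < u1)%N -> (u1 < n1)%N -> u2 = n2 ->
     (is_NE phi mu q p1 p2 <->
      (t1 phi mu q n1 n2 u2%:R - 1 <= u1%:R /\ u1%:R <= t1 phi mu q n1 n2 u2%:R))) /\
  (* [4] *)
  (u1 = n1 -> u2 = n2 ->
     (is_NE phi mu q p1 p2 <->
      n1%:R * (1 - q) <= q * mu / phi + n2%:R + (1 - q))).
Proof.
move=> hp hm hq0 hq1 hn u1 u2.
have hM : 0 < mu / phi by apply: divr_gt0.
have S1 := side1 p1 p2 hp hm hq0 hq1.
have S2 := side2 p1 p2 hp hm hq0 hq1.
simpl in S1, S2.
set M := mu / phi in hM S1 S2.
set a : R := u1%:R. set b : R := u2%:R. set N1 : R := n1%:R. set N2 : R := n2%:R.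
have NE : is_NE phi mu q p1 p2 <->
  (((0 < u1)%N -> DP1 q M a b N1 N2) /\ ((u1 < n1)%N -> IP1 q M a b N1 N2) /\
   ((0 < u2)%N -> DP2 q M a b N1 N2) /\ ((u2 < n2)%N -> IP2 q M a b N1 N2)).
  rewrite /is_NE; split.
  - by case=> /S1 [h1 h2] /S2 [h3 h4].
  - by case=> h1 [h2 [h3 h4]]; split; [apply/S1|apply/S2]; split.
have Et1 : forall x, t1 phi mu q n1 n2 x = T1 q M N1 N2 x.
  by move=> x; rewrite /t1 /T1 /M mulrA.
have Et2 : forall x, t2 phi mu q n1 n2 x = T2 q M N1 N2 x.
  by move=> x; rewrite /t2 /T2 /M mulrA.
have hu1 : (u1 <= n1)%N := dpcount_le p1.
have hu2 : (u2 <= n2)%N := dpcount_le p2.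
have ha : 0 <= a by rewrite /a ler0n.
have hb : 0 <= b by rewrite /b ler0n.
have hN1 : 0 <= N1 by rewrite /N1 ler0n.
have hN2 : 0 <= N2 by rewrite /N2 ler0n.
have hN : N2 <= N1 by rewrite /N1 /N2 ler_nat.
split; [|split; [|split]].
- case=> [[e1 e2]|[e1 e2]] /NE [h1 [h2 [h3 h4]]].
  + apply: (A1a hq0 hq1 hM (a:=a) (b:=b) (N1:=N1) (N2:=N2)).
    * by rewrite /a /N1 e1.
    * by rewrite /b /N2 natr1 ler_nat.
    * done.
    * by apply: h1; rewrite e1; apply: leq_trans hn; apply: leq_trans e2.
    * exact: h4.
  + apply: (A1b hq0 hq1 hM (a:=a) (b:=b) (N1:=N1) (N2:=N2) _ _ _ hN).
    * by rewrite /a e1.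
    * by rewrite /b ler1n.
    * by rewrite /b /N2 ler_nat.
    * by apply: h2; rewrite e1; apply: leq_trans hn; apply: leq_trans hu2.
- move=> l1 l2; rewrite NE Et1 Et2 L_t1I // L_t2I //; split.
  + by case=> _ [i1 [_ i2]]; split; [apply: i1|apply: i2].
  + case=> i1 i2; have [d1 d2] := A2 hq0 hq1 hM ha hb hN1 hN2 i1 i2.
    split; [move=> _; exact: d1|split; [move=> _; exact: i1|split=> _; [exact: d2|exact: i2]]].
- move=> l1 l2 e2; rewrite NE Et1 L_t1I // L_t1D //; split.
  + by case=> h1 [h2 _]; split; [apply: h2|apply: h1].
  + case=> i1 d1.
    have e : b = N2 by rewrite /b /N2 e2.
    split; [move=> _; exact: d1|split; [move=> _; exact: i1|split]].
    * move=> _; exact: (A3 hq0 hq1 hM e ha hN1 hN2 i1).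
    * by rewrite e2 ltnn.
- move=> e1 e2.
  have ea : a = N1 by rewrite /a /N1 e1.
  have eb : b = N2 by rewrite /b /N2 e2.
  rewrite -mulrA -/M NE; split.
  + case=> h1 _.
    case: (posnP n1) => [n10|n1p].
      have : N1 = 0 by rewrite /N1 n10.
      move=> ->. have : 0 <= q * M by apply: mulr_ge0 => //; apply: ltW.
      move: hq1 hN2; lra.
    by rewrite -(A4 hq0 hq1 hM ea eb); apply: h1; rewrite e1.
  + move=> h; split; [|split; [|split]].
    * by rewrite (A4 hq0 hq1 hM ea eb).
    * by rewrite e1 ltnn.
    * move=> _; exact: (A4b hq0 hq1 hM ea eb hN h).
    * by rewrite e2 ltnn.
Qed.
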